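(* Let $n \geq 4$, and let $\beta$ be an integer satisfying $-2 \leq 8\beta - 3n \leq 2$. Then for every $X \subseteq E(H_\beta)$, $$|X|(8\beta - 3n) + t(X) + n(n - 2\beta - 1)\left(2\beta - \frac{n}{2} + 1\right) \leq \frac{n^3}{16}.$$
   Context: Take $n$ vertices arranged in a circle. For distinct vertices $u,v$, $d(u,v) = 1 + |\{w: u,w,v \text{ distinct, in clockwise order}\}|$, and $d(u,u)=0$. $G_\beta$ is the digraph on these $n$ vertices with edge set $\{uv : 0 < d(u,v) \leq \beta\}$, and $H_\beta$ is its spanning subgraph with edge set $\{uv : d(u,v) = \beta\}$. For $X \subseteq E(H_\beta)$, $t(X)$ is the number of vertices incident with exactly one edge of $X$. *)

(* Defs.v *)
From HB Require Import structures.
From mathcomp Require Import all_boot all_order all_algebra.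
Set Implicit Arguments. Unset Strict Implicit. Unset Printing Implicit Defensive.
Import Order.TTheory GRing.Theory Num.Theory.

(* Vertices of the circle are 'I_n, labelled 0,1,...,n-1 in clockwise order. *)

Definition cwoff (n : nat) (u v : 'I_n) : nat := (v + n - u) %% n.

Definition cw3 (n : nat) (u w v : 'I_n) : bool :=
  [&& u != w, w != v, u != v & cwoff u w < cwoff u v].

Definition cdist (n : nat) (u v : 'I_n) : nat :=
  if u == v then 0 else (#|[set w | cw3 u w v]|).+1.

Definition EH (n : nat) (beta : int) : {set 'I_n * 'I_n} :=
  [set e | Posz (cdist e.1 e.2) == beta].

Definition tX (n : nat) (X : {set 'I_n * 'I_n}) : nat :=
  #|[set v : 'I_n | #|[set e in X | (e.1 == v) || (e.2 == v)]| == 1]|.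

(* Main.v *)
Require Import Defs.
From HB Require Import structures.
From mathcomp Require Import all_boot all_order all_algebra zify ring lra.
Import Order.TTheory GRing.Theory Num.Theory.
Set Implicit Arguments. Unset Strict Implicit.

Lemma cwoffP n (u w : 'I_n) :
  ((u <= w)%N /\ cwoff u w = (w - u)%N) \/ ((w < u)%N /\ cwoff u w = (w + n - u)%N).
Proof.
have hu := ltn_ord u; have hw := ltn_ord w.
rewrite /cwoff; case: (leqP u w) => h; [left|right]; split => //.
  have -> : (w + n - u = (w - u) + n)%N by lia.
  by rewrite modnDr modn_small //; lia.
by rewrite modn_small //; lia.
Qed.

Lemma cw3N n (u w v : 'I_n) : cw3 u w v =
  [&& (nat_of_ord u != w), (nat_of_ord w != v), (nat_of_ord u != v) & (cwoff u w < cwoff u v)%N].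
Proof. by []. Qed.

Lemma lt1 n (u v v' : 'I_n) : u != v -> u != v' -> (cwoff u v < cwoff u v')%N ->
  (cdist u v < cdist u v')%N.
Proof.
move=> h1 h2 h3; rewrite /cdist (negbTE h1) (negbTE h2) ltnS.
apply: proper_card; apply/properP; split.
  apply/subsetP => w; rewrite !inE !cw3N => /and4P [a b c d].
  move: h1 h2; rewrite -!val_eqE /= => h1 h2.
  have := cwoffP u w; have := cwoffP u v; have := cwoffP u v'.
  have := ltn_ord u; have := ltn_ord v; have := ltn_ord v'; have := ltn_ord w.
  move=> *; apply/and4P; split; lia.
exists v; rewrite !inE !cw3N ?eqxx ?andbF //.
move: h1 h2; rewrite -!val_eqE /= => h1 h2.
have := cwoffP u v; have := cwoffP u v'.
have := ltn_ord u; have := ltn_ord v; have := ltn_ord v'.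
move=> *; apply/and4P; split; first [lia | assumption].
Qed.

Lemma lt2 n (u u' v : 'I_n) : u != v -> u' != v -> (cwoff u v < cwoff u' v)%N ->
  (cdist u v < cdist u' v)%N.
Proof.
move=> h1 h2 h3; rewrite /cdist (negbTE h1) (negbTE h2) ltnS.
apply: proper_card; apply/properP; split.
  apply/subsetP => w; rewrite !inE !cw3N => /and4P [a b c d].
  move: h1 h2; rewrite -!val_eqE /= => h1 h2.
  have := cwoffP u w; have := cwoffP u v; have := cwoffP u' v; have := cwoffP u' w.
  have := ltn_ord u; have := ltn_ord v; have := ltn_ord u'; have := ltn_ord w.
  move=> *; apply/and4P; split; first [lia | assumption].
exists u; rewrite !inE !cw3N ?eqxx ?andbF //.
move: h1 h2; rewrite -!val_eqE /= => h1 h2.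
have := cwoffP u v; have := cwoffP u' v; have := cwoffP u' u.
have := ltn_ord u; have := ltn_ord v; have := ltn_ord u'.
move=> *; apply/and4P; split; first [lia | assumption].
Qed.
Lemma cdist_inj1 n (u v v' : 'I_n) : u != v -> u != v' -> cdist u v = cdist u v' -> v = v'.
Proof.
move=> h1 h2 he; apply/eqP; apply/negPn/negP => hne.
have hc : cwoff u v != cwoff u v'.
  move: hne; rewrite -val_eqE /=.
  have := cwoffP u v; have := cwoffP u v'.
  have := ltn_ord u; have := ltn_ord v; have := ltn_ord v'. lia.
case: (ltngtP (cwoff u v) (cwoff u v')) hc => // hlt _.
  by have := lt1 h1 h2 hlt; rewrite he ltnn.
by have := lt1 h2 h1 hlt; rewrite he ltnn.
Qed.

Lemma cdist_inj2 n (u u' v : 'I_n) : u != v -> u' != v -> cdist u v = cdist u' v -> u = u'.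
Proof.
move=> h1 h2 he; apply/eqP; apply/negPn/negP => hne.
have hc : cwoff u v != cwoff u' v.
  move: hne; rewrite -val_eqE /=.
  have := cwoffP u v; have := cwoffP u' v.
  have := ltn_ord u; have := ltn_ord v; have := ltn_ord u'. lia.
case: (ltngtP (cwoff u v) (cwoff u' v)) hc => // hlt _.
  by have := lt2 h1 h2 hlt; rewrite he ltnn.
by have := lt2 h2 h1 hlt; rewrite he ltnn.
Qed.

Lemma cdist0 n (u : 'I_n) : cdist u u = 0.
Proof. by rewrite /cdist eqxx. Qed.

Lemma comb n (X : {set 'I_n * 'I_n}) b : 0 < b ->
  (forall e, e \in X -> cdist e.1 e.2 = b) ->
  tX X <= 2 * #|X| /\ tX X + 2 * #|X| <= 2 * n.
Proof.
move=> hb hX.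
have hne e : e \in X -> e.1 != e.2.
  move=> /hX he; apply/eqP => h; move: he; rewrite h cdist0 => h0; by rewrite -h0 in hb.
pose out := fun v => #|[set e in X | e.1 == v]|.
pose inn := fun v => #|[set e in X | e.2 == v]|.
have Hout : \sum_v out v = #|X|.
  rewrite -sum1_card (partition_big (fun e => e.1) xpredT) //=.
  apply: eq_bigr => v _; rewrite /out /inn -sum1_card; apply: eq_bigl => e; by rewrite !inE.
have Hinn : \sum_v inn v = #|X|.
  rewrite -sum1_card (partition_big (fun e => e.2) xpredT) //=.
  apply: eq_bigr => v _; rewrite /out /inn -sum1_card; apply: eq_bigl => e; by rewrite !inE.
have out1 v : out v <= 1.
  apply/card_le1_eqP => [[x y] [x' y']]; rewrite !inE /= => /andP [hx /eqP ex] /andP [hx' /eqP ex'].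
  subst x x'.
  have h1 := hne _ hx; have h2 := hne _ hx'.
  have := hX _ hx; have := hX _ hx' => /= e1 e2.
  by move: (cdist_inj1 h1 h2); rewrite /= e1 e2 => /(_ erefl) ->.
have inn1 v : inn v <= 1.
  apply/card_le1_eqP => [[x y] [x' y']]; rewrite !inE /= => /andP [hx /eqP ex] /andP [hx' /eqP ex'].
  subst y y'.
  have h1 := hne _ hx; have h2 := hne _ hx'.
  have := hX _ hx; have := hX _ hx' => /= e1 e2.
  by move: (cdist_inj2 h1 h2); rewrite /= e1 e2 => /(_ erefl) ->.
have deg v : #|[set e in X | (e.1 == v) || (e.2 == v)]| = out v + inn v.
  have -> : [set e in X | (e.1 == v) || (e.2 == v)] =
     [set e in X | e.1 == v] :|: [set e in X | e.2 == v].
    by apply/setP => e; rewrite !inE andb_orr.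
  rewrite cardsU.
  have -> : [set e in X | e.1 == v] :&: [set e in X | e.2 == v] = set0.
    apply/setP => e; rewrite !inE.
    apply/negbTE/negP => /andP [/andP [hx /eqP e1] /andP [_ /eqP e2]].
    by move: (hne _ hx); rewrite e1 e2 eqxx.
  by rewrite cards0 subn0.
have Ht : tX X = \sum_v (out v + inn v == 1 : nat).
  rewrite /tX -sum1_card big_mkcond /=; apply: eq_bigr => v _.
  by rewrite inE deg; case: ifP.
split.
  rewrite Ht mul2n -addnn -{1}Hout -{1}Hinn -big_split /=.
  apply: leq_sum => v _; by case: eqP => // ->.
rewrite Ht mul2n -addnn -{1}Hout -{1}Hinn -!big_split /=.
apply: (@leq_trans (\sum_(v < n) 2)); last by rewrite sum_nat_const card_ord mulnC.
apply: leq_sum => v _; have := out1 v; have := inn1 v.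
by case: (out v) => [|[|]] //; case: (inn v) => [|[|]].
Qed.
Local Open Scope ring_scope.

Theorem mainTheorem15 (n : nat) (beta : int) (X : {set 'I_n * 'I_n}) :
  (4 <= n)%N ->
  -2 <= 8 * beta - 3 * (n%:Z) <= 2 ->
  X \subset EH n beta ->
  (#|X|%:Q * (8 * beta%:~R - 3 * n%:Q) + (tX X)%:Q
     + n%:Q * (n%:Q - 2 * beta%:~R - 1) * (2 * beta%:~R - n%:Q / 2 + 1)
   <= n%:Q ^+ 3 / 16).
Proof.
move=> hn /andP [ha1 ha2] hX.
case: beta ha1 ha2 hX => b ha1 ha2 hX; last by exfalso; lia.
have hb : (0 < b)%N by lia.
have hX' : forall e, e \in X -> cdist e.1 e.2 = b.
  by move=> e /(subsetP hX); rewrite inE => /eqP [].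
have [h1 h2] := comb hb hX'.
have H1 : (tX X)%:R <= 2 * (#|X|%:R) :> rat.
  by rewrite -natrM ler_nat.
have H2 : (tX X)%:R + 2 * (#|X|%:R) <= 2 * n%:R :> rat.
  by rewrite -!natrM -natrD ler_nat.
have H0 : 0 <= (tX X)%:R :> rat by rewrite ler0n.
have H4 : 4 <= n%:R :> rat by rewrite (ler_nat _ 4).
change ((Posz b)%:~R : rat) with (b%:R : rat).
change ((Posz n)%:~R : rat) with (n%:R : rat).
have : (8 * b + 2 = 3 * n)%N \/ (8 * b + 1 = 3 * n)%N \/ (8 * b = 3 * n)%N \/
           (8 * b = 3 * n + 1)%N \/ (8 * b = 3 * n + 2)%N by lia.
case=> [E|[E|[E|[E|E]]]]; have := congr1 (fun m => m%:R : rat) E; rewrite /= ?natrD ?natrM => E'.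
- have -> : (b%:R : rat) = (3 * n%:R - 2) / 8 by lra.
  nra.
- have -> : (b%:R : rat) = (3 * n%:R - 1) / 8 by lra.
  nra.
- have -> : (b%:R : rat) = (3 * n%:R) / 8 by lra.
  nra.
- have -> : (b%:R : rat) = (3 * n%:R + 1) / 8 by lra.
  nra.
- have -> : (b%:R : rat) = (3 * n%:R + 2) / 8 by lra.
  nra.
Qed.
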